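(* Let $U$ be a finite nonempty set, $R$ an equivalence relation on $U$, and $M(R)$ the support matroid induced by $R$, with rank function $r_{(R)}$. Then for every $X\subseteq U$, $$r_{(R)}(X)=|\{RN(x)\mid x\in U,\ RN(x)\cap X\neq\emptyset\}|,$$ i.e. the number of equivalence classes of $R$ meeting $X$.
   Context: For $x\in U$, $RN(x)=\{y\in U\mid xRy\}$; $R^{*}(X)=\{x\in U\mid RN(x)\cap X\neq\emptyset\}$. Let $\mathbf{S}(R)=\{X\subseteq U\mid R^{*}(X)=U\}$. The support matroid $M(R)=(U,\mathbf{I}(R))$ is the matroid on $U$ whose independent sets $\mathbf{I}(R)$ are the subsets of inclusion-minimal members of $\mathbf{S}(R)$. The rank function of a matroid $(U,\mathbf{I})$ is $r(X)=\max\{|I|\mid I\subseteq X,\ I\in\mathbf{I}\}$. *)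

(* Defs.v *)
From mathcomp Require Import all_boot.
Set Implicit Arguments. Unset Strict Implicit. Unset Printing Implicit Defensive.

Section Support.
Variable T : finType.
Variable R : rel T.

Definition RN (x : T) : {set T} := [set y | R x y].

Definition Rstar (X : {set T}) : {set T} := [set x | RN x :&: X != set0].

Definition supp (X : {set T}) : bool := Rstar X == [set: T].

Definition supp_indep (I : {set T}) : bool :=
  [exists B : {set T}, minset supp B && (I \subset B)].

Definition supp_rank (X : {set T}) : nat :=
  \max_(I : {set T} | supp_indep I && (I \subset X)) #|I|.

End Support.

(* Main.v *)
Require Import Defs.
From mathcomp Require Import all_boot.

Section Aux.
Variable T : finType.
Variable R : rel T.
Hypothesis eqR : equivalence_rel R.

Lemma Rrefl x : R x x. Proof. by case: (eqR x x x). Qed.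
Lemma Rsym {x y} : R x y -> R y x.
Proof. move=> H; case: (eqR x y x) => _ /(_ H) E; by rewrite -E Rrefl. Qed.
Lemma Rtrans {x y z} : R x y -> R y z -> R x z.
Proof. move=> H1 H2; case: (eqR x y z) => _ /(_ H1) ->; exact H2. Qed.

Lemma RN_eq {a b} : R a b -> RN R a = RN R b.
Proof. move=> H; apply/setP=> z; rewrite !inE; case: (eqR a b z) => _ /(_ H) ->. by []. Qed.

Lemma RN_self a : a \in RN R a. Proof. by rewrite inE Rrefl. Qed.

Lemma min_inj {B} : minset (supp R) B -> {in B &, injective (RN R)}.
Proof.
move/minsetP=> [sB minB] y z yB zB E.
apply/eqP; apply/negPn/negP => nyz.
have Ryz : R y z by have := RN_self z; rewrite -E inE.
have : B :\ z \subset B by apply: subsetDl.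
move=> sub.
have sC : supp R (B :\ z).
  apply/eqP/setP => x; rewrite !inE.
  move/eqP/setP: sB => /(_ x); rewrite !inE => /set0Pn [w]; rewrite !inE => /andP [Rxw wB].
  apply/set0Pn; case: (eqVneq w z) => [wz|wnz].
    subst w; exists y; rewrite !inE yB (Rtrans Rxw (Rsym Ryz)) andbT.
    by [].
  by exists w; rewrite !inE Rxw wnz wB.
have := minB _ sC sub; move/setP => /(_ z); by rewrite !inE eqxx zB.
Qed.

Variable X : {set T}.
Definition CX := [set RN R x | x in [set x : T | RN R x :&: X != set0]].

Lemma indep_le I : supp_indep R I -> I \subset X -> #|I| <= #|CX|.
Proof.
move=> /existsP [B /andP [mB sIB]] sIX.
have inj := min_inj mB.
rewrite -(card_in_imset (f:=RN R) (D:=I)); last first.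
  by move=> y z yI zI; apply: inj; apply: (subsetP sIB).
apply: subset_leq_card; apply/subsetP => c /imsetP [y yI ->].
apply/imsetP; exists y => //; rewrite inE; apply/set0Pn; exists y.
by rewrite inE RN_self (subsetP sIX).
Qed.

Definition rep x := if [pick y in RN R x :&: X] is Some y then y
  else odflt x [pick y in RN R x].

Lemma rep_in x : rep x \in RN R x.
Proof.
rewrite /rep; case: pickP => [y|_]; first by rewrite inE => /andP [].
by case: pickP => [y //|_]; exact: RN_self.
Qed.

Lemma rep_eq x x' : R x x' -> rep x = rep x'.
Proof.
move=> H; rewrite /rep (RN_eq H); case: pickP => // _.
case: pickP => // H0; by have := H0 x'; rewrite RN_self.
Qed.

Definition BB := [set rep x | x : T].

Lemma BB_min : minset (supp R) BB.
Proof.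
have sB : supp R BB.
  apply/eqP/setP => x; rewrite !inE; apply/set0Pn; exists (rep x).
  by rewrite inE rep_in; apply/imsetP; exists x.
apply/minsetP; split => // C sC sCB.
apply/eqP; rewrite eqEsubset sCB; apply/subsetP => b /imsetP [x _ ->].
move/eqP/setP: sC => /(_ (rep x)); rewrite !inE => /set0Pn [z]; rewrite inE => /andP [Rbz zC].
have /imsetP [x' _ zE] := subsetP sCB z zC.
have Rxb : R x (rep x) by have := rep_in x; rewrite inE.
have Rxz : R x' z by have := rep_in x'; rewrite inE zE.
have : R x x'. move: Rbz; rewrite inE => Rbz. exact: (Rtrans (Rtrans Rxb Rbz) (Rsym Rxz)).
move/rep_eq => E; by rewrite E -zE.
Qed.

Lemma lower : #|CX| <= #|BB :&: X|.
Proof.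
apply: leq_trans (leq_imset_card (RN R) _).
apply: subset_leq_card; apply/subsetP => c /imsetP [x]; rewrite inE => ne ->.
apply/imsetP; exists (rep x).
  rewrite inE; apply/andP; split; first by apply/imsetP; exists x.
  rewrite /rep; case: pickP => [y|H0]; first by rewrite inE => /andP [].
  by move/set0Pn: ne => [w Hw]; have := H0 w; rewrite Hw.
by apply: RN_eq; have := rep_in x; rewrite inE.
Qed.

End Aux.

Theorem proposition6 (T : finType) (R : rel T) :
  0 < #|T| -> equivalence_rel R ->
  forall X : {set T},
    supp_rank R X = #|[set RN R x | x in [set x : T | RN R x :&: X != set0]]|.
Proof.
move=> _ eqR X; apply/eqP; rewrite eqn_leq; apply/andP; split.
  rewrite /supp_rank; apply/bigmax_leqP => I /andP [iI sIX].
  exact: (@indep_le T R eqR X I iI sIX).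
apply: leq_trans (@lower T R eqR X) _.
rewrite /supp_rank; apply: (leq_bigmax_cond (F:=fun I : {set T} => #|I|) (@BB T R X :&: X)).
rewrite subsetIr andbT; apply/existsP; exists (@BB T R X).
by rewrite (@BB_min T R eqR X) subsetIl.
Qed.
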